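(* Let $G_n$, $m$ and $T$ be as in the context. A minimal walk in $G_n$ (starting at $m$) is an Eulerian cycle of $G_n$ if and only if $T$ is a tree, i.e. $T$ contains no directed cycle (equivalently, $T$ is a spanning tree of $G_n$ in which every vertex has a directed path to $m$).
   Context: Let $A$ be a finite alphabet with a linear order $<$, extended to the lexicographic order on words: $x<y$ if $x$ is a proper prefix of $y$, or $x=uav$, $y=ubw$ with $a,b\in A$, $a<b$. Let $\mathcal{F}$ be a set of words over $A$ (forbidden words). A word $w$ is in the language if the bi-infinite periodic sequence $\cdots www\cdots$ contains no element of $\mathcal{F}$ as a factor; $W_k$ denotes the set of words of length $k$ in the language. Fix $n\geq 1$ and consider the digraph with vertex set $A^n$ and arcs $(as,sb)$ for $a,b\in A$, $s\in A^{n-1}$, $asb\in W_{n+1}$, the label of $(as,sb)$ being $b$. The de Bruijn graph of span $n$, $G_n$, is a strongly connected component of maximum size of this digraph; vertices are identified with their words. Let $m$ be the vertex of $G_n$ whose word is lexicographically largest. For each vertex $v$, let $e(v)$ be the arc of $G_n$ with tail $v$ having maximum label. $T$ is the spanning subgraph of $G_n$ with arc set $\{e(v): v\in V(G_n), v\neq m\}$. A minimal walk is the walk constructed as follows: start at $m$; at the current vertex, follow the arc of smallest label among the not-yet-used arcs with tail at this vertex; stop when no unused arc leaves the current vertex. An Eulerian cycle is a closed walk using every arc of $G_n$ exactly once. *)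

(* Defs.v *)
From HB Require Import structures.
From mathcomp Require Import all_boot all_order.
From mathcomp Require Import boolp.
Set Implicit Arguments.
Unset Strict Implicit.
Unset Printing Implicit Defensive.
Import Order.TTheory.

Section DeBruijn.
Variables (disp : Order.disp_t) (A : finOrderType disp).

Fixpoint lexlt (x y : seq A) : bool :=
  match x, y with
  | [::], _ :: _ => true
  | a :: x', b :: y' => (a < b)%O || ((a == b) && lexlt x' y')
  | _, _ => false
  end.

(* u is a factor of the bi-infinite periodic sequence ... w w w ... *)
Definition per_factor (u w : seq A) : Prop :=
  exists2 i, i < size w &
    u = take (size u) (drop i (flatten (nseq (size u).+1 w))).

Definition inL (F : seq A -> Prop) (w : seq A) : Prop :=
  forall u, F u -> ~ per_factor u w.

Variables (F : seq A -> Prop) (k : nat).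
Local Notation n := k.+1.
Local Notation V := (n.-tuple A).

(* the label of an arc (as, sb) is b, the last letter of its head *)
Definition label (v : V) : A := tnth v ord_max.

(* arc (as, sb) of the full digraph on A^n iff asb in W_{n+1} *)
Definition darc (u v : V) : bool :=
  (behead u == take k v) && `[< inL F (rcons u (label v)) >].

Definition is_scc (C : {set V}) : Prop :=
  C != set0 /\
  forall u, u \in C -> forall v, (v \in C) = (connect darc u v && connect darc v u).

Definition max_scc (C : {set V}) : Prop :=
  is_scc C /\ forall C', is_scc C' -> #|C'| <= #|C|.

Variable (C : {set V}).

Definition garc (u v : V) : bool := [&& u \in C, v \in C & darc u v].

Variable (m : V).

Definition Tarc (u v : V) : bool :=
  [&& u != m, garc u v & [forall w, garc u w ==> (label w <= label v)%O]].

Definition T_acyclic : Prop := forall u v, Tarc u v -> ~~ connect Tarc v u.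

Definition next_arc (x : V) (used : seq (V * V)) : option V :=
  [pick w | [&& garc x w, (x, w) \notin used &
     [forall w', (garc x w' && ((x, w') \notin used)) ==> (label w <= label w')%O]]].

Fixpoint mwalk (fuel : nat) (x : V) (used : seq (V * V)) : seq (V * V) :=
  match fuel with
  | 0 => [::]
  | f.+1 => if next_arc x used is Some w then (x, w) :: mwalk f w (rcons used (x, w))
            else [::]
  end.

(* the minimal walk starting at m (as the sequence of its arcs); the fuel
   exceeds the number of arcs, so the walk stops only when no unused arc
   leaves the current vertex *)
Definition min_walk : seq (V * V) := mwalk #|{: V * V}|.+1 m [::].

Definition closed_walk (p : seq (V * V)) : bool :=
  all (fun e => garc e.1 e.2) p &&
  match p with
  | [::] => true
  | e :: p' => path (fun e1 e2 : V * V => e1.2 == e2.1) e p' && ((last e p').2 == e.1)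
  end.

Definition eulerian (p : seq (V * V)) : bool :=
  [&& closed_walk p, uniq p & [forall u, forall v, garc u v ==> ((u, v) \in p)]].

End DeBruijn.

(* Main.v *)
Require Import Defs.
From HB Require Import structures.
From mathcomp Require Import all_boot all_order.
From mathcomp Require Import boolp zify.
Import Order.TTheory.
Set Implicit Arguments. Unset Strict Implicit. Unset Printing Implicit Defensive.

Lemma size_flat_nseq (T : Type) N (s : seq T) : size (flatten (nseq N s)) = N * size s.
Proof. elim: N => //= N IH; rewrite size_cat IH mulSn. by []. Qed.

Lemma nth_flat (T : Type) (x0 : T) (s : seq T) N p :
  p < N * size s -> nth x0 (flatten (nseq N s)) p = nth x0 s (p %% size s).
Proof.
elim: N p => [|N IH] p; first by rewrite mul0n.
rewrite mulSn /= nth_cat => Hp.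
case: ltnP => H; first by rewrite modn_small.
rewrite IH; last by lia.
by rewrite -{2}(subnK H) modnDr.
Qed.

Lemma pf_nth (T : Type) (x0 : T) s i L t : 0 < size s -> i < size s -> t < L ->
  nth x0 (take L (drop i (flatten (nseq L.+1 s)))) t = nth x0 s ((i + t) %% size s).
Proof.
move=> s0 iS tL; rewrite nth_take // nth_drop nth_flat //.
have : L <= L * size s by rewrite leq_pmulr.
rewrite mulSn; lia.
Qed.

Lemma pf_size (T : Type) (s : seq T) i L : 0 < size s -> i < size s ->
  size (take L (drop i (flatten (nseq L.+1 s)))) = L.
Proof.
move=> s0 iS; rewrite size_take size_drop size_flat_nseq.
have : L <= L * size s by rewrite leq_pmulr.
rewrite mulSn => H; case: ltnP => //; lia.
Qed.

Section Rot.
Variables (disp : Order.disp_t) (A : finOrderType disp).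

Lemma per_factorE (x0 : A) (u s : seq A) : 0 < size s ->
  per_factor u s <-> exists2 i, i < size s &
    forall t, t < size u -> nth x0 u t = nth x0 s ((i + t) %% size s).
Proof.
move=> s0; split.
  case=> i iS Hu; exists i => // t tu.
  by rewrite Hu pf_nth.
case=> i iS Hu; exists i => //.
apply: (@eq_from_nth _ x0); first by rewrite pf_size.
move=> t tu; by rewrite pf_nth // Hu.
Qed.

Lemma nth_rot1 (x0 : A) (s : seq A) t : t < size s ->
  nth x0 (rot 1 s) t = nth x0 s (t.+1 %% size s).
Proof.
case: s => // a s' /= ts; rewrite rot1_cons nth_rcons.
case: ltnP => H; first by rewrite modn_small.
have -> : t = size s' by lia.
rewrite modnn; case: ifP => // ; lia.
Qed.

Lemma per_factor_rot1 (u s : seq A) : per_factor u (rot 1 s) -> per_factor u s.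
Proof.
case: s => [|a s']; first by case=> i.
set s := a :: s'.
have s0 : 0 < size s by [].
rewrite (@per_factorE a u (rot 1 s)); last by rewrite size_rot.
rewrite (per_factorE a) //.
case=> i; rewrite size_rot => iS Hu.
exists (i.+1 %% size s); first by rewrite ltn_mod.
move=> t tu; rewrite Hu // nth_rot1; last by rewrite ltn_mod.
congr nth.
by rewrite -addn1 modnDml modnDml; congr modn; lia.
Qed.

Lemma inL_rot1 (F : seq A -> Prop) s : inL F s -> inL F (rot 1 s).
Proof. by move=> H u Fu /per_factor_rot1; apply: H. Qed.

Lemma inL_rot (F : seq A -> Prop) j s : j <= size s -> inL F s -> inL F (rot j s).
Proof.
elim: j => [|j IH] js H; first by rewrite rot0.
have := rot_add_mod (m:=1) (n:=j) (s:=s) (ltnW js) (leq_trans (isT : 1 <= 1) (leq_trans (ltn0Sn j) js)).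
rewrite add1n js => <-.
apply: inL_rot1; apply: IH => //; exact: ltnW.
Qed.

End Rot.

Section DB.
Variables (disp : Order.disp_t) (A : finOrderType disp) (F : seq A -> Prop) (k : nat).
Local Notation V := (k.+1.-tuple A).

Lemma label_nth (x0 : A) (v : V) : label v = nth x0 v k.
Proof. by rewrite /label (tnth_nth x0). Qed.

Lemma tuple_val (v : V) : val v = rcons (take k v) (label v).
Proof.
rewrite (label_nth (label v)) -take_nth ?size_tuple //.
by rewrite take_oversize // size_tuple.
Qed.

Lemma darc_inj (x y y' : V) : darc F x y -> darc F x y' -> label y = label y' -> y = y'.
Proof.
case/andP=> /eqP H1 _ /andP [/eqP H2 _] Hl.
by apply: val_inj; rewrite /= tuple_val [in RHS]tuple_val -H1 -H2 Hl.
Qed.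

Lemma darc_inL (x y : V) : darc F x y -> inL F (rcons x (label y)).
Proof. by case/andP=> _ /asboolP. Qed.

Lemma cycle_darc (u v : V) : darc F u v -> connect (@darc _ _ F k) v u.
Proof.
move=> Huv.
set w := rcons (val u) (label v).
have sw : size w = k.+2 by rewrite size_rcons size_tuple.
have wL : inL F w by apply: darc_inL.
pose vt j : V := insubd u (take k.+1 (rot j w)).
have vtE j : val (vt j) = take k.+1 (rot j w).
  by rewrite val_insubd size_take size_rot sw ltnSn eqxx.
have step j : j < k.+2 -> darc F (vt j) (vt j.+1).
  move=> jk.
  have rL : inL F (rot j w) by apply: inL_rot => //; rewrite sw ltnW.
  have sr : size (rot j w) = k.+2 by rewrite size_rot.
  have Er : rot j.+1 w = rot 1 (rot j w).
    rewrite (rot_add_mod (m:=1) (n:=j)) ?sw ?(ltnW jk) //.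
    by rewrite add1n jk.
  move: rL sr Er; case Erw: (rot j w) => [|a r'] // rL [sr'] Er.
  have E1 : val (vt j.+1) = r'.
    by rewrite vtE Er rot1_cons -cats1 take_size_cat.
  apply/andP; split.
    by rewrite vtE Erw /= E1.
  apply/asboolP; suff -> : rcons (vt j) (label (vt j.+1)) = a :: r' by [].
  rewrite vtE Erw /= (label_nth a) E1 -take_nth ?sr' //.
  by rewrite take_oversize ?sr'.
have chain d i : i + d <= k.+2 -> connect (@darc _ _ F k) (vt i) (vt (i + d)).
  elim: d i => [|d IH] i H; first by rewrite addn0.
  apply: (connect_trans (connect1 (step i _))); first by lia.
  by rewrite -addSnnS; apply: IH; lia.
have E0 : vt 0 = u by apply: val_inj; rewrite vtE rot0 /w -cats1 -{1}(size_tuple u) take_size_cat.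
have E1 : vt 1 = v.
  apply: val_inj; rewrite vtE.
  move: Huv; case/andP=> /eqP Hb _.
  rewrite [in RHS]tuple_val -Hb /w.
  have su := size_tuple u.
  rewrite /w -[\val u]/(tval u); move: Hb su; case: (tval u) => [|a u'] //= Hb [su].
  have s2 : size (rcons u' (label v)) = k.+1 by rewrite size_rcons su.
  by rewrite rot1_cons -[rcons (rcons _ _) a]cats1 -{1}s2 take_size_cat.
have Ek : vt (1 + k.+1) = u.
  rewrite -E0; apply: val_inj; rewrite !vtE add1n -sw rot_size rot0 //.
by rewrite -E1 -Ek; apply: chain.
Qed.

End DB.

Section Bal.
Variables (disp : Order.disp_t) (A : finOrderType disp) (F : seq A -> Prop) (k : nat).
Local Notation V := (k.+1.-tuple A).
Variable (C : {set V}).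
Hypothesis Hscc : is_scc F C.

Lemma closure_out (x y : V) : x \in C -> darc F x y -> y \in C.
Proof.
case: Hscc => _ H xC Hxy.
rewrite (H x xC y); apply/andP; split; [exact: connect1 | exact: cycle_darc].
Qed.

Lemma closure_in (a x : V) : x \in C -> darc F a x -> a \in C.
Proof.
case: Hscc => _ H xC Hax.
rewrite (H x xC a); apply/andP; split; [exact: cycle_darc | exact: connect1].
Qed.

Lemma card_out (x : V) :
  #|[set y | darc F x y]| = #|[set b : A | `[< inL F (rcons x b) >]]|.
Proof.
rewrite -(card_in_imset (f := @label _ _ k)); last first.
  by move=> y y'; rewrite !inE; apply: darc_inj.
apply: eq_card => b; rewrite [in RHS]inE; apply/imsetP/idP.
  by case=> y; rewrite inE => /darc_inL H ->; apply/asboolP.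
move=> Hb.
have sz : size (rcons (behead x) b) == k.+1 by rewrite size_rcons size_behead size_tuple.
exists (insubd x (rcons (behead x) b)).
  rewrite inE; apply/andP; split.
    by rewrite val_insubd sz -cats1 take_size_cat // size_behead size_tuple.
  rewrite (label_nth b) val_insubd sz nth_rcons size_behead size_tuple ltnn eqxx.
  exact: Hb.
by rewrite (label_nth b) val_insubd sz nth_rcons size_behead size_tuple ltnn eqxx.
Qed.

Lemma card_in (x : V) :
  #|[set a | darc F a x]| = #|[set c : A | `[< inL F (c :: x) >]]|.
Proof.
pose hd (a : V) := head (label x) (val a).
have Ha a : darc F a x -> val a = hd a :: take k x.
  case/andP=> /eqP <- _; rewrite /hd.
  by case: a => [[|c a'] Hs].
rewrite -(card_in_imset (f := hd)); last first.
  move=> a a'; rewrite !inE => /Ha H1 /Ha H2 E.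
  by apply: val_inj; rewrite H1 H2 E.
apply: eq_card => c; rewrite [in RHS]inE; apply/imsetP/idP.
  case=> a; rewrite inE => Hax ->.
  have := darc_inL Hax; rewrite Ha // rcons_cons -tuple_val => H; exact/asboolP.
move=> Hc.
have sz : size (c :: take k x) == k.+1 by rewrite /= size_take size_tuple ltnSn.
exists (insubd x (c :: take k x)); last by rewrite /hd val_insubd sz.
rewrite inE; apply/andP; split; first by rewrite val_insubd sz.
by rewrite val_insubd sz rcons_cons -tuple_val.
Qed.

Lemma balance (x : V) :
  #|[set y | garc F C x y]| = #|[set y | garc F C y x]|.
Proof.
case xC: (x \in C); last first.
  rewrite (_ : [set y | garc F C x y] = set0); last by apply/setP=> y; rewrite !inE /garc xC.
  rewrite (_ : [set y | garc F C y x] = set0) //.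
  by apply/setP=> y; rewrite !inE /garc xC andbF.
rewrite (_ : [set y | garc F C x y] = [set y | darc F x y]); last first.
  apply/setP=> y; rewrite !inE /garc xC /=; apply/andP/idP; first by case.
  by move=> H; split=> //; apply: closure_out H.
rewrite (_ : [set y | garc F C y x] = [set y | darc F y x]); last first.
  apply/setP=> y; rewrite !inE /garc xC /=; apply/andP/idP; first by case.
  by move=> H; split=> //; apply: closure_in H.
rewrite card_out card_in; apply: eq_card => c; rewrite !inE.
apply/asboolP/asboolP => H.
  have := @inL_rot _ _ F (size x) (rcons x c); rewrite -cats1 rot_size_cat; apply.
    by rewrite size_cat leq_addr.
  by rewrite cats1.
by rewrite -rot1_cons; apply: inL_rot1.
Qed.

End Bal.

Section Walk.
Variables (disp : Order.disp_t) (A : finOrderType disp) (F : seq A -> Prop) (k : nat).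
Local Notation V := (k.+1.-tuple A).
Variables (C : {set V}) (m : V).
Hypothesis HB : forall x : V, #|[set y | garc F C x y]| = #|[set y | garc F C y x]|.
Local Notation g := (garc F C).
Local Notation W := (min_walk F C m).

Lemma garc_inj (x y y' : V) : g x y -> g x y' -> label y = label y' -> y = y'.
Proof. rewrite /garc => /and3P [_ _ H1] /and3P [_ _ H2] H3; exact: darc_inj H1 H2 H3. Qed.

Lemma next_arcP (x : V) U w : next_arc F C x U = Some w ->
  [/\ g x w, (x,w) \notin U &
      forall w', g x w' -> (x,w') \notin U -> (label w <= label w')%O].
Proof.
rewrite /next_arc; case: pickP => // w0 /and3P [H1 H2 /forallP H3] [<-].
split=> // w' a b.
by have := H3 w'; rewrite a b.
Qed.

Lemma next_arcN (x : V) U : next_arc F C x U = None -> forall w, g x w -> (x,w) \in U.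
Proof.
rewrite /next_arc; case: pickP => // H _ w gw; apply/negPn/negP => nU.
pose P := [pred w | g x w && ((x,w) \notin U)].
have Pw : P w by rewrite /P /= gw nU.
case: (arg_minP (fun w : V => label w) Pw) => w0 /andP [a b] Hmin.
have := H w0; rewrite a b /=; move/negP; apply; apply/forallP => w'.
apply/implyP => Pw'; exact: Hmin.
Qed.

Lemma max_arc (x y : V) : g x y ->
  exists2 y0, g x y0 & forall w, g x w -> (label w <= label y0)%O.
Proof.
move=> gy; pose P := [pred w | g x w].
have Py : P y by [].
case: (arg_maxP (fun w : V => label w) Py) => y0 a b; exists y0 => //.
Qed.

Lemma mwalk_spec f (x : V) U (p := mwalk F C f x U) :
  [/\ map fst p = belast x (map snd p),
      forall e0 i, i < size p ->
        next_arc F C (nth e0 p i).1 (U ++ take i p) = Some (nth e0 p i).2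
    & size p < f -> next_arc F C (last x (map snd p)) (U ++ p) = None].
Proof.
rewrite /p {p}; elim: f x U => [|f IH] x U /=; first by split.
case E: (next_arc F C x U) => [w|] /=; last by split=> //; rewrite cats0.
have [H1 H2 H3] := IH w (rcons U (x,w)).
split.
- by rewrite H1.
- move=> e0 [|i] /=; first by rewrite cats0.
  by rewrite ltnS -cat_rcons => /H2.
- by rewrite ltnS -cat_rcons.
Qed.

Lemma W_chain : map fst W = belast m (map snd W).
Proof. by case: (mwalk_spec #|{: V * V}|.+1 m [::]). Qed.

Lemma W_greedy e0 i : i < size W ->
  next_arc F C (nth e0 W i).1 (take i W) = Some (nth e0 W i).2.
Proof. by case: (mwalk_spec #|{: V * V}|.+1 m [::]) => _ H _ /(H e0). Qed.

Lemma W_arcs e : e \in W -> g e.1 e.2.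
Proof. by move=> /(nthP e) [i iW <-]; case: (next_arcP (W_greedy e iW)). Qed.

Lemma W_uniq : uniq W.
Proof.
apply/negPn/negP => /(uniqPn (m,m)) [i [j [ij jW E]]].
case: (next_arcP (W_greedy (m,m) jW)) => _; rewrite -surjective_pairing => H _.
have : nth (m,m) W i \in take j W.
  by rewrite -(nth_take _ ij) mem_nth // size_take jW.
by rewrite E (negbTE H).
Qed.

Lemma W_end : next_arc F C (last m (map snd W)) W = None.
Proof.
case: (mwalk_spec #|{: V * V}|.+1 m [::]) => _ _; rewrite cat0s; apply.
by rewrite ltnS -(card_uniqP W_uniq) max_card.
Qed.

Lemma cnt_out z : count (pred1 z) (map fst W) = #|[set y | (z,y) \in W]|.
Proof.
rewrite count_map -size_filter.
have U : uniq (map snd (filter (preim fst (pred1 z)) W)).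
  rewrite map_inj_in_uniq ?filter_uniq ?W_uniq //.
  move=> [a b] [a' b']; rewrite !mem_filter /= => /andP [/eqP -> _] /andP [/eqP -> _] ->.
  by [].
rewrite -(size_map snd) -(card_uniqP U); apply: eq_card => y; rewrite inE.
apply/mapP/idP.
  by case=> [[a b]]; rewrite mem_filter /= => /andP [/eqP -> ?] ->.
by move=> H; exists (z,y) => //; rewrite mem_filter /= eqxx.
Qed.

Lemma cnt_in z : count (pred1 z) (map snd W) = #|[set y | (y,z) \in W]|.
Proof.
rewrite count_map -size_filter.
have U : uniq (map fst (filter (preim snd (pred1 z)) W)).
  rewrite map_inj_in_uniq ?filter_uniq ?W_uniq //.
  move=> [a b] [a' b']; rewrite !mem_filter /= => /andP [/eqP -> _] /andP [/eqP -> _] ->.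
  by [].
rewrite -(size_map fst) -(card_uniqP U); apply: eq_card => y; rewrite inE.
apply/mapP/idP.
  by case=> [[a b]]; rewrite mem_filter /= => /andP [/eqP -> ?] ->.
by move=> H; exists (y,z) => //; rewrite mem_filter /= eqxx.
Qed.

Lemma count_id z : (m == z) + count (pred1 z) (map snd W) =
  count (pred1 z) (map fst W) + (last m (map snd W) == z).
Proof.
rewrite W_chain; have := lastI m (map snd W); move: (map snd W) => s E.
have : count (pred1 z) (m :: s) = (m == z) + count (pred1 z) s by [].
by rewrite E -cats1 count_cat /= addn0 => <-.
Qed.

Lemma used_out z : [set y | (z,y) \in W] \subset [set y | g z y].
Proof. by apply/subsetP => y; rewrite !inE => /W_arcs. Qed.

Lemma used_in z : [set y | (y,z) \in W] \subset [set y | g y z].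
Proof. by apply/subsetP => y; rewrite !inE => /W_arcs. Qed.

Lemma W_last : last m (map snd W) = m.
Proof.
apply/eqP/negPn/negP => Hz.
set z := last m (map snd W) in Hz.
have := count_id z.
rewrite eq_sym (negbTE Hz) eqxx cnt_in cnt_out add0n addn1.
have E : [set y | (z,y) \in W] = [set y | g z y].
  apply/eqP; rewrite eqEsubset used_out; apply/subsetP => y; rewrite !inE => gy.
  exact: (next_arcN W_end gy).
rewrite E => Hin.
by have := subset_leq_card (used_in z); rewrite Hin -HB ltnn.
Qed.

Lemma used_bal z : #|[set y | (y,z) \in W]| = #|[set y | (z,y) \in W]|.
Proof. rewrite -cnt_in -cnt_out; have := count_id z; rewrite W_last; lia. Qed.

Lemma path_chain (e : V * V) p :
  path (fun e1 e2 : V * V => e1.2 == e2.1) e p = (map fst p == belast e.2 (map snd p)).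
Proof.
elim: p e => [|e' p IH] e //=.
by rewrite IH eqseq_cons eq_sym.
Qed.

Lemma W_closed : closed_walk F C W.
Proof.
rewrite /closed_walk; apply/andP; split; first by apply/allP => e /W_arcs.
move: W_chain W_last; case: (min_walk F C m) => [|e p] //= [E1 E2] Hl.
by rewrite path_chain E2 eqxx /= -last_map Hl E1.
Qed.

Lemma acyc_euler : T_acyclic F C m -> eulerian F C W.
Proof.
move=> Hac; rewrite /eulerian W_closed W_uniq /=.
apply/forallP => u; apply/forallP => v; apply/implyP => guv.
apply/negPn/negP => nuv.
pose S := [set x | [exists y, g x y && ((x,y) \notin W)]].
have mS : m \notin S.
  rewrite inE negb_exists; apply/forallP => y; rewrite negb_and negbK.
  case gy: (g m y) => //=.
  by have := next_arcN W_end; rewrite W_last; apply.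
have step x : x \in S -> exists2 y, Tarc F C m x y & y \in S.
  rewrite inE => /existsP [y1 /andP [g1 n1]].
  have xm : x != m.
    apply: contraNneq mS => <-; rewrite inE; apply/existsP; exists y1; by rewrite g1 n1.
  case: (max_arc g1) => y0 g0 M0.
  have T0 : Tarc F C m x y0.
    by rewrite /Tarc xm g0 /=; apply/forallP => w; apply/implyP; exact: M0.
  have n0 : (x,y0) \notin W.
    apply/negP => H0.
    have iW : index (x,y0) W < size W by rewrite index_mem.
    have := W_greedy (x,y0) iW; rewrite nth_index //= => /next_arcP [_ _ Hm].
    have : (x,y1) \notin take (index (x,y0) W) W by apply: contra n1; apply: mem_take.
    move/(Hm _ g1) => L01.
    have L10 := M0 _ g1.
    have E : y0 = y1 by apply: garc_inj g0 g1 _; apply/le_anti; rewrite L01 L10.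
    by move: n1; rewrite -E H0.
  exists y0 => //.
  rewrite inE; apply: contraT => Hn.
  have sub : [set y | g y0 y] \subset [set y | (y0,y) \in W].
    apply/subsetP => y; rewrite !inE => gy; move: Hn.
    by rewrite negb_exists => /forallP /(_ y); rewrite gy /= negbK.
  have prop : [set y | (y, y0) \in W] \proper [set y | g y y0].
    rewrite properE used_in /=; apply/subsetPn; exists x; rewrite !inE //.
  have := subset_leq_card sub; rewrite HB -used_bal.
  by rewrite leqNgt (proper_card prop).
have uS : u \in S by rewrite inE; apply/existsP; exists v; rewrite guv nuv.
suff H : forall n x, #|[set y | connect (Tarc F C m) x y]| <= n -> x \notin S.
  by move: uS; apply/negP; apply: (H _ u (leqnn _)).
elim=> [|n IH] x Hx.
  apply/negP => _; move: Hx; rewrite leqn0 => /eqP /cards0_eq /setP /(_ x).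
  by rewrite !inE connect0.
apply/negP => xS; case: (step x xS) => y Txy yS.
have : [set z | connect (Tarc F C m) y z] \proper [set z | connect (Tarc F C m) x z].
  rewrite properE; apply/andP; split.
    apply/subsetP => z; rewrite !inE; apply: connect_trans; exact: connect1.
  apply/subsetPn; exists x; rewrite !inE ?connect0 //.
  exact: Hac.
move/proper_card => H.
have : #|[set z | connect (Tarc F C m) y z]| <= n by rewrite -ltnS; exact: leq_trans H Hx.
by move/IH; rewrite yS.
Qed.

Lemma euler_acyc : eulerian F C W -> T_acyclic F C m.
Proof.
case/and3P => _ _ /forallP Hall.
have inW u v : g u v -> (u,v) \in W.
  by move=> guv; have := Hall u; move/forallP/(_ v)/implyP; apply.
have lastex u v y : Tarc F C m u v -> g u y -> index (u,y) W <= index (u,v) W.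
  case/and3P=> um guv /forallP Mv gy.
  rewrite leqNgt; apply/negP => Hlt.
  have iW : index (u,v) W < size W by rewrite index_mem inW.
  have := W_greedy (u,v) iW; rewrite nth_index ?inW //= => /next_arcP [_ _ Hm].
  have nt : (u,y) \notin take (index (u,v) W) W.
    apply/negP => /index_ltn H; move: (ltn_trans H Hlt); by rewrite ltnn.
  have L1 := Hm _ gy nt.
  have L2 : (label y <= label v)%O by have := Mv y; rewrite gy.
  have E : v = y by apply: garc_inj guv gy _; apply/le_anti; rewrite L1 L2.
  by move: Hlt; rewrite E ltnn.
have Tfun u v v' : Tarc F C m u v -> Tarc F C m u v' -> v = v'.
  case/and3P=> _ g1 /forallP M1 /and3P [_ g2 /forallP M2].
  have := M1 v'; have := M2 v; rewrite g1 g2 /= => L2 L1.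
  by apply: (garc_inj g1 g2); apply/le_anti; rewrite L1 L2.
pose psi x := if [pick y | Tarc F C m x y] is Some y then index (x,y) W else size W.
have psiE u v : Tarc F C m u v -> psi u = index (u,v) W.
  move=> T; rewrite /psi; case: pickP => [v' T'|/(_ v)]; last by rewrite T.
  by rewrite (Tfun _ _ _ T' T).
have psi_lt u v : Tarc F C m u v -> psi u < psi v.
  move=> Tuv; rewrite (psiE _ _ Tuv); set i := index (u,v) W.
  have guv : g u v by case/and3P: Tuv.
  have iW : i < size W by rewrite index_mem inW.
  have ni : nth (m,m) W i = (u,v) by rewrite nth_index ?inW.
  rewrite /psi; case: pickP => [w Tvw|_]; last by [].
  have vm : v != m by case/and3P: Tvw.
  have i1 : i.+1 < size W.
    rewrite ltn_neqAle iW andbT; apply: contra vm => /eqP Hi.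
    apply/eqP; rewrite -W_last -nth_last size_map -Hi /=.
    by rewrite (nth_map (m,m)) // ni.
  set e := nth (m,m) W i.+1.
  have e1 : e.1 = v.
    have := congr1 (nth m ^~ i.+1) W_chain; rewrite (nth_map (m,m)) // => ->.
    have := lastI m (map snd W) => E.
    have sb : i.+1 < size (belast m (map snd W)) by rewrite size_belast size_map.
    have : nth m (m :: map snd W) i.+1 = nth m (belast m (map snd W)) i.+1.
      by rewrite E nth_rcons sb.
    by move=> <- /=; rewrite (nth_map (m,m)) // ni.
  have ge : g v e.2 by rewrite -e1; apply: W_arcs; rewrite mem_nth.
  have := lastex v w e.2 Tvw ge.
  have -> : index (v, e.2) W = i.+1 by rewrite -e1 -surjective_pairing index_uniq // W_uniq.
  by [].
have psi_mono x y : connect (Tarc F C m) x y -> psi x <= psi y.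
  case/connectP => p; elim: p x => [|z p IH] x /=; first by move=> _ ->.
  case/andP => Txz Hp Ey; exact: leq_trans (ltnW (psi_lt _ _ Txz)) (IH _ Hp Ey).
move=> u v Tuv; apply/negP => /psi_mono H.
by have := psi_lt _ _ Tuv; rewrite ltnNge H.
Qed.

End Walk.

Theorem theorem2 (disp : Order.disp_t) (A : finOrderType disp)
  (F : seq A -> Prop) (k : nat) (C : {set k.+1.-tuple A}) (m : k.+1.-tuple A) :
  max_scc F C ->
  m \in C ->
  (forall v, v \in C -> v != m -> lexlt v m) ->
  (eulerian F C (min_walk F C m) <-> T_acyclic F C m).
Proof.
move=> [Hscc _] _ _.
have HB := balance Hscc.
split; [exact: (euler_acyc HB) | exact: (acyc_euler HB)].
Qed.
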